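(* Let $\mathbf{X}=(X_1,\ldots,X_d)$ be a random vector (components not necessarily independent), $Y=\eta(\mathbf{X})\in\mathcal{Y}$, and $k_{\mathcal{Y}}$ a positive definite kernel on $\mathcal{Y}$ with $\mathbb{E}_{\xi\sim\mathrm{P}_{Y\mid\mathbf{X}_A=\mathbf{x}_A}}k_{\mathcal{Y}}(\xi,\xi)<\infty$ for all $A\subseteq\{1,\ldots,d\}$ and all $\mathbf{x}_A$, and assume $\mathrm{MMD}^2_{\mathrm{tot}}>0$. Define for $A\subseteq\{1,\ldots,d\}$ $$\mathrm{val}(A)=\frac{\mathbb{E}_{\mathbf{X}_A}\big(\mathrm{MMD}^2(\mathrm{P}_Y,\mathrm{P}_{Y\mid\mathbf{X}_A})\big)}{\mathrm{MMD}^2_{\mathrm{tot}}},\qquad \mathrm{val}'(A)=\frac{\mathbb{E}_{\mathbf{X}_{-A}}\big[\mathbb{E}_{\xi\sim\mathrm{P}_{Y\mid\mathbf{X}_{-A}}}k_{\mathcal{Y}}(\xi,\xi)-\mathbb{E}_{\xi,\xi'\sim\mathrm{P}_{Y\mid\mathbf{X}_{-A}}}k_{\mathcal{Y}}(\xi,\xi')\big]}{\mathrm{MMD}^2_{\mathrm{tot}}}.$$ Then for every $l=1,\ldots,d$, the Shapley value of $l$ computed with value function $\mathrm{val}'$ equals the Shapley value of $l$ computed with value function $\mathrm{val}$ (the MMD-Shapley effect $Sh^{\mathrm{MMD}}_l$).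
   Context: For a value function $v$ on subsets of $\{1,\ldots,d\}$, the Shapley value of $l$ is $\phi_l(v)=\frac1d\sum_{A\subseteq\{1,\ldots,d\}\setminus\{l\}}\binom{d-1}{|A|}^{-1}\big(v(A\cup\{l\})-v(A)\big)$. $\mathbf{X}_A$ is the subvector with indices in $A$, $\mathbf{X}_{-A}$ that with indices in $\{1,\ldots,d\}\setminus A$; $\mathrm{P}_{Y\mid\mathbf{X}_A}$ is the conditional law of $Y$ given $\mathbf{X}_A$ (equal to $\mathrm{P}_Y$ when $A=\emptyset$), and $\xi,\xi'$ are independent draws from it. $\mathrm{MMD}^2(\mathrm{P},\mathrm{Q})=\mathbb{E}k_{\mathcal{Y}}(\xi,\xi')-2\mathbb{E}k_{\mathcal{Y}}(\xi,\zeta)+\mathbb{E}k_{\mathcal{Y}}(\zeta,\zeta')$ with $\xi,\xi'\sim\mathrm{P}$, $\zeta,\zeta'\sim\mathrm{Q}$ independent, and $\mathrm{MMD}^2_{\mathrm{tot}}=\mathbb{E}k_{\mathcal{Y}}(Y,Y)-\mathbb{E}k_{\mathcal{Y}}(Y,Y')$ with $Y'$ an independent copy of $Y$. *)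

(* Defs.v *)
From HB Require Import structures.
From mathcomp Require Import all_boot all_order all_algebra.
From mathcomp Require Import all_classical all_reals all_analysis measurable_realfun.
Set Implicit Arguments. Unset Strict Implicit. Unset Printing Implicit Defensive.
Import Order.TTheory GRing.Theory Num.Theory.
Local Open Scope classical_set_scope.
Local Open Scope ring_scope.

Definition shapley (R : realFieldType) (d : nat) (v : {set 'I_d} -> R) (l : 'I_d) : R :=
  d%:R^-1 * \sum_(A : {set 'I_d} | l \notin A)
              ('C(d.-1, #|A|))%:R^-1 * (v (l |: A) - v A).

Definition pos_def_kernel (R : realType) (T : Type) (k : T -> T -> R) : Prop :=
  (forall a b, k a b = k b a) /\
  forall (n : nat) (xs : 'I_n -> T) (c : 'I_n -> R),
    0 <= \sum_(i < n) \sum_(j < n) c i * c j * k (xs i) (xs j).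

Definition sigmaX {dO : measure_display} {Om : measurableType dO} {d : nat}
  {dX : 'I_d -> measure_display} {TX : forall i, measurableType (dX i)}
  (X : forall i : 'I_d, Om -> TX i) (A : {set 'I_d}) : set (set Om) :=
  <<s \bigcup_(i in [set i | i \in A]) preimage_set_system setT (X i) measurable >>.

(* kappa is a regular conditional distribution of Y given X_A (= sigma(X_A)):
   a probability kernel Omega -> TY such that omega |-> kappa omega C is
   sigma(X_A)-measurable and a version of P(Y in C | sigma(X_A)). *)
Definition is_cond_law {R : realType} {dO : measure_display} {Om : measurableType dO}
  {dY : measure_display} {TY : measurableType dY} {d : nat}
  {dX : 'I_d -> measure_display} {TX : forall i, measurableType (dX i)}
  (P : probability Om R) (X : forall i : 'I_d, Om -> TX i) (Y : Om -> TY)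
  (A : {set 'I_d}) (kappa : Om -> probability TY R) : Prop :=
  (forall C : set TY, measurable C ->
     forall B : set (\bar R), measurable B ->
       sigmaX X A ((fun w => kappa w C) @^-1` B)) /\
  (forall C : set TY, measurable C -> forall E : set Om, sigmaX X A E ->
     P (E `&` Y @^-1` C) = (\int[P]_(w in E) kappa w C)%E).

Local Open Scope ereal_scope.

Definition Ekdiag {R : realType} {dY} {TY : measurableType dY}
  (k : TY -> TY -> R) (Q : probability TY R) : \bar R :=
  \int[Q]_a (k a a)%:E.

Definition Ekpair {R : realType} {dY} {TY : measurableType dY}
  (k : TY -> TY -> R) (Q : probability TY R) : \bar R :=
  \int[Q]_a \int[Q]_b (k a b)%:E.

Definition Ekcross {R : realType} {dO} {Om : measurableType dO} {dY} {TY : measurableType dY}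
  (P : probability Om R) (Y : Om -> TY) (k : TY -> TY -> R) (Q : probability TY R) : \bar R :=
  \int[Q]_a \int[P]_w (k a (Y w))%:E.

Definition EkYY' {R : realType} {dO} {Om : measurableType dO} {dY} {TY : measurableType dY}
  (P : probability Om R) (Y : Om -> TY) (k : TY -> TY -> R) : \bar R :=
  \int[P]_w \int[P]_w' (k (Y w) (Y w'))%:E.

Definition MMD2Y {R : realType} {dO} {Om : measurableType dO} {dY} {TY : measurableType dY}
  (P : probability Om R) (Y : Om -> TY) (k : TY -> TY -> R) (Q : probability TY R) : \bar R :=
  EkYY' P Y k - 2%:E * Ekcross P Y k Q + Ekpair k Q.

Definition MMD2tot {R : realType} {dO} {Om : measurableType dO} {dY} {TY : measurableType dY}
  (P : probability Om R) (Y : Om -> TY) (k : TY -> TY -> R) : \bar R :=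
  \int[P]_w (k (Y w) (Y w))%:E - EkYY' P Y k.

(* val(A) = E_{X_A} MMD^2(P_Y, P_{Y|X_A}) / MMD^2_tot,
   where kappa A omega = P_{Y | X_A = X_A(omega)}. *)
Definition val_MMD {R : realType} {dO} {Om : measurableType dO} {dY} {TY : measurableType dY}
  {d : nat} (P : probability Om R) (Y : Om -> TY) (k : TY -> TY -> R)
  (kappa : {set 'I_d} -> Om -> probability TY R) (A : {set 'I_d}) : R :=
  (fine (\int[P]_w MMD2Y P Y k (kappa A w)) / fine (MMD2tot P Y k))%R.

Definition val'_MMD {R : realType} {dO} {Om : measurableType dO} {dY} {TY : measurableType dY}
  {d : nat} (P : probability Om R) (Y : Om -> TY) (k : TY -> TY -> R)
  (kappa : {set 'I_d} -> Om -> probability TY R) (A : {set 'I_d}) : R :=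
  (fine (\int[P]_w (Ekdiag k (kappa (~: A) w) - Ekpair k (kappa (~: A) w)))
     / fine (MMD2tot P Y k))%R.

(* Main.v *)
Require Import Defs.
From HB Require Import structures.
From mathcomp Require Import all_boot all_order all_algebra.
From mathcomp Require Import all_classical all_reals all_analysis measurable_realfun giry.
From mathcomp Require Import ring lra zify.
Import Order.TTheory GRing.Theory Num.Theory.
Local Open Scope ring_scope.
Lemma shapley_dual (R : realFieldType) d (v : {set 'I_d} -> R) l :
  shapley (fun A => 1 - v (~: A)) l = shapley v l.
Proof.
rewrite /shapley; congr (_ * _).
pose h (A : {set 'I_d}) := (~: A) :\ l :|: (A :&: [set l]).
have hh : cancel h h.
  move=> A; apply/setP => x; rewrite /h !inE.
  by case: (x =P l) => [->|_]; case: (_ \in A).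
rewrite (reindex_inj (can_inj hh)) /=.
apply: eq_big => A.
  by rewrite /h !inE eqxx /=; case: (l \in A).
move=> lhA.
have lA : l \notin A by move: lhA; rewrite /h !inE eqxx /=; case: (l \in A).
have hA : h A = ~: A :\ l.
  apply/setP => x; rewrite /h !inE.
  by case: (x =P l) => [->|_]; rewrite ?(negbTE lA) /= ?andbT ?andbF ?orbF.
have e1 : ~: (l |: h A) = A.
  apply/setP => x; rewrite hA !inE.
  case: (x =P l) => [->|_] /=; first by rewrite (negbTE lA).
  by rewrite negbK.
have e2 : ~: h A = l |: A.
  apply/setP => x; rewrite hA !inE.
  by case: (x =P l) => [->|_] /=; rewrite ?negbK.
rewrite e1 e2.
have cA : (#|A| < d)%N.
  have : A \proper [set: 'I_d].
    by apply/properP; split; [exact: finset.subsetT | exists l].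
  by move/proper_card; rewrite cardsT card_ord.
have ch : #|h A| = (d.-1 - #|A|)%N.
  rewrite hA.
  have h1 := cardsD1 l (~: A); rewrite inE lA /= in h1.
  have h2 := cardsC A; rewrite card_ord in h2.
  have e : d.-1 = (#|A| + #|~: A :\ l|)%N by rewrite -[X in X.-1 = _]h2 h1 addnCA add1n.
  by rewrite e addKn.
rewrite ch bin_sub; last by rewrite -ltnS prednK // (leq_ltn_trans _ cA).
congr (_ * _); lra.
Qed.


Local Open Scope classical_set_scope.

Lemma pdk_ge0 (R : realType) (T : Type) (k : T -> T -> R) :
  pos_def_kernel k -> forall a, 0 <= k a a.
Proof.
move=> [_ hk] a; have := hk 1%N (fun _ => a) (fun _ => 1).
by rewrite !big_ord1 !mul1r.
Qed.

Lemma pdk_abs (R : realType) (T : Type) (k : T -> T -> R) :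
  pos_def_kernel k -> forall a b, `|k a b| <= k a a + k b b.
Proof.
move=> [hs hk] a b.
have h1 := hk 2%N (fun i : 'I_2 => if val i == 0%N then a else b)
                  (fun i => if val i == 0%N then 1 else -1).
have h2 := hk 2%N (fun i : 'I_2 => if val i == 0%N then a else b) (fun _ => 1).
rewrite !big_ord_recr !big_ord0 /= in h1 h2.
rewrite (hs b a) in h1 h2.
have ha := @pdk_ge0 _ _ _ (conj hs hk) a.
have hb := @pdk_ge0 _ _ _ (conj hs hk) b.
rewrite ler_norml; apply/andP; split; lra.
Qed.

Local Open Scope ereal_scope.

Lemma MG (R : realType) {d1 d2} {T1 : measurableType d1} {T2 : measurableType d2}
  (psi : T1 -> giry T2 R) (mpsi : measurable_fun setT psi)
  (h : T2 -> \bar R) (mh : measurable_fun setT h) :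
  measurable_fun setT (fun w => \int[psi w]_x h x).
Proof.
apply: (eq_measurable_fun (fun w => \int[psi w]_x h^\+ x - \int[psi w]_x h^\- x)).
  by move=> w _; rewrite [RHS]integralE.
apply: emeasurable_funB.
  apply: (measurableT_comp (f := giry_int ^~ h^\+) _ mpsi).
  apply: measurable_giry_int; first exact: measurable_funepos.
  by move=> x; exact: funepos_ge0.
apply: (measurableT_comp (f := giry_int ^~ h^\-) _ mpsi).
apply: measurable_giry_int; first exact: measurable_funeneg.
by move=> x; exact: funeneg_ge0.
Qed.

Lemma MF (R : realType) {d1 d2} {T1 : measurableType d1} {T2 : measurableType d2}
  (m : {sigma_finite_measure set T2 -> \bar R})
  (f : T1 * T2 -> \bar R) (mf : measurable_fun setT f) :
  measurable_fun setT (fun x => \int[m]_y f (x, y)).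
Proof.
apply: (eq_measurable_fun (fun x => \int[m]_y f^\+ (x, y) - \int[m]_y f^\- (x, y))).
  by move=> w _; rewrite [RHS]integralE; congr (_ - _); apply: eq_integral => y _; rewrite !(funeposE, funenegE).
apply: emeasurable_funB.
  apply: (@measurable_fun_fubini_tonelli_F _ _ _ _ _ m (f^\+)); first exact: measurable_funepos.
  by move=> x; exact: funepos_ge0.
apply: (@measurable_fun_fubini_tonelli_F _ _ _ _ _ m (f^\-)); first exact: measurable_funeneg.
by move=> x; exact: funeneg_ge0.
Qed.

Section Main.
Context (R : realType) (dO : measure_display) (Om : measurableType dO)
  (P : probability Om R) (d : nat)
  (dX : 'I_d -> measure_display) (TX : forall i, measurableType (dX i))
  (X : forall i : 'I_d, Om -> TX i)
  (hX : forall i, measurable_fun setT (X i))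
  (dY : measure_display) (TY : measurableType dY)
  (Y : Om -> TY)
  (hY : measurable_fun setT Y)
  (k : TY -> TY -> R)
  (hk : pos_def_kernel k)
  (hkm : measurable_fun setT (fun p : TY * TY => k p.1 p.2))
  (kappa : {set 'I_d} -> Om -> probability TY R)
  (hkappa : forall A, is_cond_law P X Y A (kappa A))
  (hfin : forall A w, (Ekdiag k (kappa A w) < +oo)%E).

Lemma sigmaX_meas A E : sigmaX X A E -> measurable E.
Proof.
apply: smallest_sub; first exact: sigma_algebra_measurable.
move=> F [i _ [B mB <-]].
by apply: (hX i).
Qed.

Lemma sigmaXT A : sigmaX X A setT.
Proof. by rewrite -setC0; apply: sigma_algebraC; exact: sigma_algebra0. Qed.

Lemma mphi A : measurable_fun setT (fun w => (kappa A w : giry TY R)).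
Proof.
apply: measurable_giry_codensity => // C mC _ B mB; rewrite setTI.
exact: sigmaX_meas ((hkappa A).1 C mC B mB).
Qed.

Lemma disint A h : measurable_fun setT h -> (forall x, 0 <= h x) ->
  \int[P]_w \int[kappa A w]_a h a = \int[P]_w h (Y w).
Proof.
move=> mh h0.
have := giry_int_bind (P : giry Om R) (mphi A) mh h0.
rewrite /giry_int => <-.
rewrite (eq_measure_integral (giry_map hY (P : giry Om R))); last first.
  move=> C mC _ /=.
  rewrite giry_int_map//; last exact: measurable_giry_ev.
  rewrite /giry_int /giry_ev /=.
  have := (hkappa A).2 C mC setT (sigmaXT A).
  by rewrite setTI => <-.
by have := giry_int_map hY (P : giry Om R) mh h0; rewrite /giry_int.
Qed.

Lemma int_plus_cst {dS} {S : measurableType dS} (mu : probability S R)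
  (u : S -> \bar R) (c : \bar R) :
  measurable_fun setT u -> (forall x, 0 <= u x) -> 0 <= c ->
  \int[mu]_x (u x + c) = \int[mu]_x u x + c.
Proof.
move=> mu0 u0 c0.
rewrite ge0_integralD// integral_cst//.
congr (_ + _); rewrite -[RHS]mule1; congr (_ * _); exact: probability_setT.
Qed.

Lemma mk_comp {dS} {S : measurableType dS} (f1 f2 : S -> TY) :
  measurable_fun setT f1 -> measurable_fun setT f2 ->
  measurable_fun setT (fun s => (k (f1 s) (f2 s))%:E).
Proof.
move=> m1 m2; apply/measurable_EFinP.
exact: (measurableT_comp hkm (measurable_fun_pair m1 m2)).
Qed.

Lemma mk_abs {dS} {S : measurableType dS} (f1 f2 : S -> TY) :
  measurable_fun setT f1 -> measurable_fun setT f2 ->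
  measurable_fun setT (fun s => `|(k (f1 s) (f2 s))%:E|).
Proof.
move=> m1 m2; apply: measurableT_comp; [exact: abse_measurable | exact: mk_comp].
Qed.

Lemma mkdiag : measurable_fun setT (fun a => (k a a)%:E).
Proof. by apply: (@mk_comp _ _ (fun x => x) (fun x => x)).
Show. Qed.

Lemma kdiag_ge0 a : 0 <= (k a a)%:E.
Proof. by rewrite lee_fin; exact: pdk_ge0. Qed.

Lemma BND {dS} {S : measurableType dS} (nu : probability S R) (y : S -> TY)
  (my : measurable_fun setT y) a :
  \int[nu]_s `|(k a (y s))%:E| <= (k a a)%:E + \int[nu]_s (k (y s) (y s))%:E.
Proof.
rewrite addeC -int_plus_cst//; last exact: kdiag_ge0.
- apply: ge0_le_integral => //.
  + by apply: (@mk_abs _ _ (fun=> a) y) => //; exact: measurable_cst.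
  + apply: emeasurable_funD; first exact: mk_comp.
    exact: measurable_cst.
  + move=> s _; rewrite -EFinD /= lee_fin.
    by rewrite addrC; exact: pdk_abs.
- exact: mk_comp.
- by move=> x; exact: kdiag_ge0.
Qed.

Definition Hf (a : TY) : \bar R := \int[P]_w (k a (Y w))%:E.
Definition Eg : \bar R := \int[P]_w (k (Y w) (Y w))%:E.

Lemma Eg_ge0 : 0 <= Eg.
Proof. by apply: integral_ge0 => x _; exact: kdiag_ge0. Qed.

Lemma mHf : measurable_fun setT Hf.
Proof.
apply: (@MF _ _ _ _ _ P (fun p : TY * Om => (k p.1 (Y p.2))%:E)).
apply: mk_comp; first exact: measurable_fst.
exact: (measurableT_comp hY measurable_snd).
Qed.

Lemma Hf_bound a : `|Hf a| <= (k a a)%:E + Eg.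
Proof.
apply: (le_trans _ (BND P Y hY a)).
apply: le_abse_integral => //.
by apply: (@mk_comp _ _ (fun=> a) Y) => //; exact: measurable_cst.
Qed.

Lemma inner_meas (mu : probability TY R) :
  measurable_fun setT (fun a => \int[mu]_b (k a b)%:E).
Proof.
apply: (@MF _ _ _ _ _ mu (fun p : TY * TY => (k p.1 p.2)%:E)).
by apply: mk_comp; [exact: measurable_fst | exact: measurable_snd].
Qed.

Lemma Ekdiag_ge0 mu : 0 <= Ekdiag k mu.
Proof. by apply: integral_ge0 => x _; exact: kdiag_ge0. Qed.

Lemma abs_inner_bound (mu : probability TY R) :
  \int[mu]_a \int[mu]_b `|(k a b)%:E| <= Ekdiag k mu + Ekdiag k mu.
Proof.
rewrite -int_plus_cst//; last exact: Ekdiag_ge0.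
- apply: ge0_le_integral => //.
  + by move=> a _; apply: integral_ge0 => x _.
  + apply: (@measurable_fun_fubini_tonelli_F _ _ _ _ _ mu (fun p : TY * TY => `|(k p.1 p.2)%:E|)) => //.
    by apply: mk_abs; [exact: measurable_fst | exact: measurable_snd].
  + by apply: emeasurable_funD => //; exact: mkdiag.
  + by move=> a _; exact: (BND mu (fun x => x) (@measurable_id _ _ setT) a).
- exact: mkdiag.
- by move=> x; exact: kdiag_ge0.
Qed.

Lemma Pp_bound (mu : probability TY R) :
  `|Ekpair k mu| <= Ekdiag k mu + Ekdiag k mu.
Proof.
apply: le_trans; last exact: abs_inner_bound.
apply: le_trans; first exact: (le_abse_integral _ _ (inner_meas mu)).
apply: ge0_le_integral => //.
- apply: measurableT_comp; [exact: abse_measurable | exact: inner_meas].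
- apply: (@measurable_fun_fubini_tonelli_F _ _ _ _ _ mu (fun p : TY * TY => `|(k p.1 p.2)%:E|)) => //.
  by apply: mk_abs; [exact: measurable_fst | exact: measurable_snd].
- move=> a _; apply: le_abse_integral => //.
  by apply: (@mk_comp _ _ (fun=> a) (fun x => x)) => //; exact: measurable_cst.
Qed.

Lemma C_bound (mu : probability TY R) :
  `|Ekcross P Y k mu| <= Ekdiag k mu + Eg.
Proof.
rewrite /Ekcross -int_plus_cst//; last exact: Eg_ge0.
- apply: le_trans; first exact: (le_abse_integral _ _ mHf).
  apply: ge0_le_integral => //.
  + apply: measurableT_comp; [exact: abse_measurable | exact: mHf].
  + by apply: emeasurable_funD => //; exact: mkdiag.
  + by move=> a _; exact: Hf_bound.
- exact: mkdiag.
- by move=> x; exact: kdiag_ge0.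
Qed.

Lemma Ekpair_prod (mu : probability TY R) : Ekdiag k mu < +oo ->
  Ekpair k mu = \int[giry_prod ((mu : giry TY R), (mu : giry TY R))]_p (k p.1 p.2)%:E.
Proof.
move=> hmu.
have mK : measurable_fun setT (fun p : TY * TY => (k p.1 p.2)%:E).
  by apply: mk_comp; [exact: measurable_fst | exact: measurable_snd].
have iK : ((mu : {sigma_finite_measure set TY -> \bar R}) \x (mu : {sigma_finite_measure set TY -> \bar R})).-integrable setT (fun p : TY * TY => (k p.1 p.2)%:E).
  apply/integrable12ltyP => //.
  apply: le_lt_trans; first exact: abs_inner_bound.
  by rewrite lte_add_pinfty.
rewrite /Ekpair -(integral12_prod_meas1 iK).
by [].
Qed.

Lemma mPp B : measurable_fun setT (fun w => Ekpair k (kappa B w)).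
Proof.
apply: (eq_measurable_fun (fun w => \int[giry_prod ((kappa B w : giry TY R), (kappa B w : giry TY R))]_p (k p.1 p.2)%:E)).
  by move=> w _; rewrite Ekpair_prod.
apply: (@MG R _ _ _ _ (fun w => giry_prod ((kappa B w : giry TY R), (kappa B w : giry TY R)))).
  exact: (measurableT_comp measurable_giry_prod (measurable_fun_pair (mphi B) (mphi B))).
by apply: mk_comp; [exact: measurable_fst | exact: measurable_snd].
Qed.

Lemma mD B : measurable_fun setT (fun w => Ekdiag k (kappa B w)).
Proof. have h := @MG R _ _ _ _ _ (mphi B) _ mkdiag; exact h. Qed.

Lemma mC B : measurable_fun setT (fun w => Ekcross P Y k (kappa B w)).
Proof. have h := @MG R _ _ _ _ _ (mphi B) _ mHf; exact h. Qed.

Lemma pos_le_abs {T : Type} (f : T -> \bar R) x : f^\+ x <= `|f x|.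
Proof. by rewrite funeposE ge_max lee_abs abse_ge0. Qed.

Lemma neg_le_abs {T : Type} (f : T -> \bar R) x : f^\- x <= `|f x|.
Proof. by rewrite funenegE ge_max -abseN lee_abs abse_ge0. Qed.

Lemma intD B : \int[P]_w Ekdiag k (kappa B w) = Eg.
Proof. rewrite /Ekdiag disint//; [exact: mkdiag | exact: kdiag_ge0]. Qed.

Section WithEg.
Hypothesis hEg : Eg < +oo.

Lemma Eg_fin : Eg \is a fin_num.
Proof. by rewrite ge0_fin_numE// Eg_ge0. Qed.

Lemma iD B : P.-integrable setT (fun w => Ekdiag k (kappa B w)).
Proof.
apply/integrableP; split; first exact: mD.
rewrite (eq_integral (fun w => Ekdiag k (kappa B w))); last first.
  by move=> w _; rewrite gee0_abs// Ekdiag_ge0.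
by rewrite intD.
Qed.

Lemma iPp B : P.-integrable setT (fun w => Ekpair k (kappa B w)).
Proof.
apply: (le_integrable measurableT (mPp B) _ (integrableD measurableT (iD B) (iD B))).
move=> w _ /=; rewrite [X in _ <= X]gee0_abs; last by rewrite adde_ge0// Ekdiag_ge0.
exact: Pp_bound.
Qed.

Lemma iC B : P.-integrable setT (fun w => Ekcross P Y k (kappa B w)).
Proof.
apply: (le_integrable measurableT (mC B) _ (integrableD measurableT (iD B) (finite_measure_integrable_cst P (fine Eg) measurableT))).
move=> w _ /=; rewrite fineK ?Eg_fin// [X in _ <= X]gee0_abs; last by rewrite adde_ge0 ?Eg_ge0// Ekdiag_ge0.
exact: C_bound.
Qed.

Lemma iHY : \int[P]_w `|Hf (Y w)| < +oo.
Proof.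
apply: (@le_lt_trans _ _ (\int[P]_w ((k (Y w) (Y w))%:E + Eg))).
  apply: ge0_le_integral => //.
  - apply: measurableT_comp; first exact: abse_measurable.
    exact: (measurableT_comp mHf hY).
  - apply: emeasurable_funD => //.
    exact: (@mk_comp _ _ Y Y hY hY).
  - by move=> w _; exact: Hf_bound.
rewrite int_plus_cst//; first by rewrite lte_add_pinfty.
- exact: (@mk_comp _ _ Y Y hY hY).
- by move=> x; exact: kdiag_ge0.
- exact: Eg_ge0.
Qed.

Lemma intC B : \int[P]_w Ekcross P Y k (kappa B w) = EkYY' P Y k.
Proof.
have mHp : measurable_fun setT Hf^\+ by exact: measurable_funepos mHf.
have mHn : measurable_fun setT Hf^\- by exact: measurable_funeneg mHf.
have ip : P.-integrable setT (fun w => \int[kappa B w]_a Hf^\+ a).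
  apply/integrableP; split.
    have h := @MG R _ _ _ _ _ (mphi B) _ mHp; exact h.
  rewrite (eq_integral (fun w => \int[kappa B w]_a Hf^\+ a)); last first.
    by move=> w _; rewrite gee0_abs// integral_ge0// => x _; exact: funepos_ge0.
  rewrite (@disint B _ mHp); last by move=> x; exact: funepos_ge0.
  apply: le_lt_trans iHY; apply: ge0_le_integral => //.
  - exact: (measurableT_comp mHp hY).
  - apply: measurableT_comp; first exact: abse_measurable.
    exact: (measurableT_comp mHf hY).
  - by move=> x _; exact: pos_le_abs.
have in_ : P.-integrable setT (fun w => \int[kappa B w]_a Hf^\- a).
  apply/integrableP; split.
    have h := @MG R _ _ _ _ _ (mphi B) _ mHn; exact h.
  rewrite (eq_integral (fun w => \int[kappa B w]_a Hf^\- a)); last first.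
    by move=> w _; rewrite gee0_abs// integral_ge0// => x _; exact: funeneg_ge0.
  rewrite (@disint B _ mHn); last by move=> x; exact: funeneg_ge0.
  apply: le_lt_trans iHY; apply: ge0_le_integral => //.
  - exact: (measurableT_comp mHn hY).
  - apply: measurableT_comp; first exact: abse_measurable.
    exact: (measurableT_comp mHf hY).
  - by move=> x _; exact: neg_le_abs.
rewrite (eq_integral (fun w => \int[kappa B w]_a Hf^\+ a - \int[kappa B w]_a Hf^\- a)); last first.
  by move=> w _; rewrite /Ekcross integralE.
rewrite integralB// (@disint B _ mHp); last by move=> x; exact: funepos_ge0.
rewrite (@disint B _ mHn); last by move=> x; exact: funeneg_ge0.
rewrite /EkYY' [RHS](_ : _ = \int[P]_w (Hf \o Y) w)// [RHS]integralE.
by congr (_ - _); apply: eq_integral => w _; rewrite !(funeposE, funenegE).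
Qed.

Lemma key B :
  (fine (\int[P]_w (Ekdiag k (kappa B w) - Ekpair k (kappa B w)))
   + fine (\int[P]_w MMD2Y P Y k (kappa B w)) = fine (MMD2tot P Y k))%R.
Proof.
have iPpB := iPp B; have iCB := iC B; have iDB := iD B.
have fe : EkYY' P Y k \is a fin_num.
  by rewrite -(intC B); exact: integrable_fin_num.
have fp : \int[P]_w Ekpair k (kappa B w) \is a fin_num.
  exact: integrable_fin_num.
have icst : P.-integrable setT (fun _ : Om => EkYY' P Y k).
  have -> : (fun _ : Om => EkYY' P Y k) = EFin \o cst (fine (EkYY' P Y k)).
    by apply/funext => x /=; rewrite fineK.
  exact: finite_measure_integrable_cst.
have i2C : P.-integrable setT (fun w => 2%:E * Ekcross P Y k (kappa B w)).
  exact: integrableZl.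
have i1 : P.-integrable setT (fun w => EkYY' P Y k - 2%:E * Ekcross P Y k (kappa B w)).
  exact: (integrableB measurableT icst i2C).
rewrite (integralB measurableT iDB iPpB) intD.
rewrite /MMD2Y (integralD measurableT i1 iPpB).
rewrite (integralB measurableT icst i2C).
rewrite (integralZl measurableT iCB) intC integral_cst//.
rewrite [X in EkYY' P Y k * X](_ : _ = 1); last exact: probability_setT.
rewrite mule1 /MMD2tot -/Eg.
rewrite -(fineK Eg_fin) -(fineK fp) -(fineK fe).
rewrite (_ : 2%:E * (fine (EkYY' P Y k))%:E = (2 * fine (EkYY' P Y k))%:E)//.
rewrite -!EFinB -!EFinD /=.
lra.
Qed.
End WithEg.

Lemma final (htot : (0 < MMD2tot P Y k)%E) l :
  shapley (val'_MMD P Y k kappa) l = shapley (val_MMD P Y k kappa) l.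
Proof.
have [T0|T0] := eqVneq (fine (MMD2tot P Y k)) 0%R.
  have -> : val'_MMD P Y k kappa = fun _ => 0%R.
    by apply/funext => A; rewrite /val'_MMD T0 invr0 mulr0.
  have -> : val_MMD P Y k kappa = fun _ => 0%R.
    by apply/funext => A; rewrite /val_MMD T0 invr0 mulr0.
  by [].
have fT : MMD2tot P Y k \is a fin_num.
  by move: T0; case: (MMD2tot P Y k) => [r||] //=; rewrite eqxx.
have hEg : Eg < +oo.
  move: fT; rewrite /MMD2tot -/Eg fin_numB => /andP[+ _].
  by rewrite ge0_fin_numE// Eg_ge0.
have hv : val'_MMD P Y k kappa = fun A => (1 - val_MMD P Y k kappa (~: A))%R.
  apply/funext => A; rewrite /val'_MMD /val_MMD.
  have := key hEg (~: A).
  move: T0.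
  set a := fine (\int[P]_w (Ekdiag k (kappa (~: A) w) - Ekpair k (kappa (~: A) w))).
  set b := fine (\int[P]_w MMD2Y P Y k (kappa (~: A) w)).
  set T := fine (MMD2tot P Y k).
  move=> T0 h; rewrite -h in T0 *.
  by field.
by rewrite hv; exact: shapley_dual.
Qed.
End Main.


Local Close Scope ereal_scope.
Local Open Scope ring_scope.

Theorem mainTheorem9 (R : realType) (dO : measure_display) (Om : measurableType dO)
  (P : probability Om R) (d : nat)
  (dX : 'I_d -> measure_display) (TX : forall i, measurableType (dX i))
  (X : forall i : 'I_d, Om -> TX i)
  (hX : forall i, measurable_fun setT (X i))
  (dY : measure_display) (TY : measurableType dY)
  (eta : (forall i : 'I_d, TX i) -> TY) (Y : Om -> TY)
  (hYeta : forall w, Y w = eta (fun i => X i w))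
  (hY : measurable_fun setT Y)
  (k : TY -> TY -> R)
  (hk : pos_def_kernel k)
  (hkm : measurable_fun setT (fun p : TY * TY => k p.1 p.2))
  (kappa : {set 'I_d} -> Om -> probability TY R)
  (hkappa : forall A, is_cond_law P X Y A (kappa A))
  (hfin : forall A w, (Ekdiag k (kappa A w) < +oo)%E)
  (htot : (0 < MMD2tot P Y k)%E) :
  forall l : 'I_d,
    shapley (val'_MMD P Y k kappa) l = shapley (val_MMD P Y k kappa) l.
Proof.
move=> l.
exact: (@final R dO Om P d dX TX X hX dY TY Y hY k hk hkm kappa hkappa hfin htot l).
Qed.
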